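(* Let $n\ge3$ and let $k\ne\mathbb{F}_2$ be a field. Let $S=k[x_{i,j}]_{1\le i<j\le 2n}$, setting $x_{j,i}:=x_{i,j}$ for $i<j$, and let $f=\sum_{M}a_M\prod_{\{i,j\}\in M}x_{i,j}$, the sum over all perfect matchings $M$ of $\{1,\dots,2n\}$, with all $a_M\in k^*$ (equivalently, $f$ is of the form $\sum_{\sigma\in S_{2n}}a_\sigma x_{\sigma(1),\sigma(2)}\cdots x_{\sigma(2n-1),\sigma(2n)}$ in which every such monomial has nonzero total coefficient). Then $f$ is not a direct sum.
   Context: A form $f$ in a polynomial ring over $k$ is a direct sum if, after an invertible linear change of the variables, it can be written as $f_1+f_2$ with $f_1,f_2$ nonzero forms in disjoint sets of the new variables. *)

(* Defs.v *)
From HB Require Import structures.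
From mathcomp Require Import all_boot all_order all_algebra.
From mathcomp Require Import mpoly.
Set Implicit Arguments. Unset Strict Implicit. Unset Printing Implicit Defensive.
Import Order.TTheory GRing.Theory.
Local Open Scope ring_scope.

Definition only_vars (k : fieldType) (m : nat) (I : {set 'I_m}) (p : {mpoly k[m]}) : Prop :=
  forall mon : 'X_{1..m}, mon \in msupp p -> forall i : 'I_m, i \notin I -> mon i = 0%N.

Definition lin_change (k : fieldType) (m : nat) (A : 'M[k]_m) : m.-tuple {mpoly k[m]} :=
  [tuple \sum_(j < m) A i j *: 'X_j | i < m].

Definition direct_sum (k : fieldType) (m : nat) (f : {mpoly k[m]}) : Prop :=
  exists (A : 'M[k]_m) (I : {set 'I_m}) (f1 f2 : {mpoly k[m]}) (d1 d2 : nat),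
    A \in unitmx /\ f1 != 0 /\ f2 != 0 /\ f1 \is d1.-homog /\ f2 \is d2.-homog /\
    only_vars I f1 /\ only_vars (~: I) f2 /\ f \mPo lin_change A = f1 + f2.

(* Variables of S = k[x_{i,j}]_{1<=i<j<=2n} are indexed by the 2-element
   subsets {i,j} of 'I_(2n) (so x_{j,i} = x_{i,j} automatically). *)
Definition edge (N : nat) := {e : {set 'I_N} | #|e| == 2%N}.
Definition nvars (N : nat) : nat := #|{: edge N}|.

(* the variable x_e for a 2-subset e (0 if e is not a 2-subset, never used) *)
Definition xe (k : fieldType) (N : nat) (e : {set 'I_N}) : {mpoly k[nvars N]} :=
  oapp (fun p : edge N => 'X_(enum_rank p)) 0 (insub e).

Definition perfect_matching (N : nat) (M : {set {set 'I_N}}) : bool :=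
  [forall e in M, #|e| == 2%N] &&
  [forall v : 'I_N, #|[set e in M | v \in e]| == 1%N].

Definition matching_poly (k : fieldType) (N : nat) (a : {set {set 'I_N}} -> k)
  : {mpoly k[nvars N]} :=
  \sum_(M : {set {set 'I_N}} | perfect_matching M) a M *: \prod_(e in M) xe k e.

(* Main.v *)
Require Import Defs.
From HB Require Import structures.
From mathcomp Require Import all_boot all_order all_algebra.
From mathcomp Require Import mpoly.
From mathcomp Require Import zify.
Local Open Scope ring_scope.

Module Helpers.
Set Implicit Arguments. Unset Strict Implicit. Unset Printing Implicit Defensive.
Import Order.TTheory GRing.Theory.
Local Open Scope ring_scope.

Lemma comp_mpoly_comp (R : comNzRingType) n k l (p : {mpoly R[n]})
  (lq : n.-tuple {mpoly R[k]}) (lr : k.-tuple {mpoly R[l]}) :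
  (p \mPo lq) \mPo lr = p \mPo [tuple (tnth lq i \mPo lr) | i < n].
Proof.
rewrite [p \mPo lq]comp_mpolyE [RHS]comp_mpolyE raddf_sum /=; apply eq_bigr => m _.
rewrite comp_mpolyZ rmorph_prod /=; congr (_ *: _); apply eq_bigr => i _.
by rewrite rmorphXn /= tnth_map tnth_ord_tuple.
Qed.

Definition chainP (R : comNzRingType) n k (lq : n.-tuple {mpoly R[k]}) (j : 'I_k) (p : {mpoly R[n]}) :=
  (p \mPo lq)^`M(j) = \sum_(i < n) (p^`M(i) \mPo lq) * (tnth lq i)^`M(j).

Lemma chain_rule (R : comNzRingType) n k (lq : n.-tuple {mpoly R[k]}) (j : 'I_k) (p : {mpoly R[n]}) :
  chainP lq j p.
Proof.
have hD : forall p q, chainP lq j p -> chainP lq j q -> chainP lq j (p + q).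
  move=> p1 q1; rewrite /chainP => h1 h2.
  rewrite comp_mpolyD mderivD h1 h2 -big_split /=; apply eq_bigr => i _.
  by rewrite mderivD comp_mpolyD mulrDl.
have hM : forall p q, chainP lq j p -> chainP lq j q -> chainP lq j (p * q).
  move=> p1 q1; rewrite /chainP => h1 h2.
  rewrite rmorphM /= mderivM h1 h2 mulr_suml mulr_sumr -big_split /=; apply eq_bigr => i _.
  rewrite mderivM comp_mpolyD !rmorphM /= mulrDl.
  by congr (_ + _); rewrite -!mulrA; congr (_ * _); rewrite mulrC.
have hC : forall c, chainP lq j c%:MP.
  move=> c; rewrite /chainP comp_mpolyC mderivC big1 // => i _.
  by rewrite mderivC comp_mpolyC mul0r.
have hX : forall i0, chainP lq j 'X_i0.
  move=> i0; rewrite /chainP comp_mpolyXU (bigD1 i0) //= big1 ?addr0.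
    rewrite mderivX mnm1E eqxx scale1r.
    have -> : (U_(i0) - U_(i0))%MM = 0%MM by apply/mnmP => l; rewrite mnmBE subnn mnm0E.
    by rewrite mpolyX0 comp_mpoly1 mul1r -tnth_nth.
  move=> i /negbTE ne; rewrite mderivX mnm1E eq_sym ne scale0r.
  by rewrite comp_mpoly0 mul0r.
have hXm : forall m, chainP lq j 'X_[m].
  move=> m; rewrite mpolyXE_id.
  elim/big_ind: _ => //; first by rewrite -mpolyC1.
  move=> i _; elim: (m i) => [|e ih]; first by rewrite expr0 -mpolyC1.
  by rewrite exprS; apply hM.
elim/mpolyind: p; first by rewrite -mpolyC0.
move=> c m p _ _ ih; apply hD => //.
by rewrite -mul_mpolyC; apply hM.
Qed.


Lemma tnth_lin (k : fieldType) m (A : 'M[k]_m) i :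
  tnth (lin_change A) i = \sum_(j < m) A i j *: 'X_j.
Proof. by rewrite /lin_change tnth_mktuple. Qed.

Lemma deriv_lin (k : fieldType) m (A : 'M[k]_m) i j :
  (tnth (lin_change A) i)^`M(j) = (A i j)%:MP.
Proof.
rewrite tnth_lin raddf_sum (bigD1 j) //= big1 ?addr0.
  rewrite mderivZ mderivX mnm1E eqxx scale1r.
  have -> : (U_(j) - U_(j))%MM = 0%MM by apply/mnmP => l; rewrite mnmBE subnn mnm0E.
  by rewrite mpolyX0 -mul_mpolyC mulr1.
move=> l /negbTE ne; rewrite mderivZ mderivX mnm1E ne scale0r scaler0 //.
Qed.

Lemma chain_lin (k : fieldType) m (A : 'M[k]_m) (p : {mpoly k[m]}) j :
  (p \mPo lin_change A)^`M(j) = \sum_(i < m) A i j *: (p^`M(i) \mPo lin_change A).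
Proof.
rewrite chain_rule; apply eq_bigr => i _.
by rewrite deriv_lin mulrC mul_mpolyC.
Qed.

Lemma comp_lin_lin (k : fieldType) m (A B : 'M[k]_m) (p : {mpoly k[m]}) :
  (p \mPo lin_change A) \mPo lin_change B = p \mPo lin_change (A *m B).
Proof.
rewrite comp_mpoly_comp; congr comp_mpoly.
apply eq_from_tnth => i; rewrite tnth_mktuple !tnth_lin raddf_sum /=.
under eq_bigr do rewrite comp_mpolyZ comp_mpolyXU -tnth_nth tnth_lin.
under eq_bigr do rewrite scaler_sumr.
rewrite exchange_big /=; apply eq_bigr => l _.
by rewrite mxE scaler_suml; apply eq_bigr => j _; rewrite scalerA.
Qed.

Lemma lin1 (k : fieldType) m : lin_change (1%:M : 'M[k]_m) = [tuple 'X_i | i < m].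
Proof.
apply eq_from_tnth => i; rewrite tnth_lin tnth_mktuple (bigD1 i) //= big1 ?addr0.
  by rewrite mxE eqxx scale1r.
by move=> j /negbTE ne; rewrite mxE eq_sym ne scale0r.
Qed.

Lemma comp_lin_inj (k : fieldType) m (A : 'M[k]_m) (p : {mpoly k[m]}) :
  A \in unitmx -> p \mPo lin_change A = 0 -> p = 0.
Proof.
move=> uA h; have := congr1 (comp_mpoly (lin_change (invmx A))) h.
by rewrite comp_lin_lin mulmxV // lin1 comp_mpoly_id comp_mpoly0.
Qed.


Lemma only_vars_deriv (k : fieldType) m (I : {set 'I_m}) (p : {mpoly k[m]}) j :
  only_vars I p -> j \notin I -> p^`M(j) = 0.
Proof.
move=> hp hj; apply/mpolyP => mu; rewrite mcoeff_mderiv mcoeff0.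
have -> : p@_(mu + U_(j)) = 0; last by rewrite mul0rn.
apply/eqP; rewrite mcoeff_eq0; apply/negP => /hp /(_ j hj).
by rewrite mnmDE mnm1E eqxx addn1.
Qed.

Lemma second_deriv_zero (k : fieldType) m (A : 'M[k]_m) (I : {set 'I_m})
  (f1 f2 f : {mpoly k[m]}) :
  A \in unitmx -> only_vars I f1 -> only_vars (~: I) f2 ->
  f \mPo lin_change A = f1 + f2 ->
  forall i j, i \in I -> j \notin I ->
  \sum_(q < m) A q j *: \sum_(r < m) A r i *: (f^`M(q))^`M(r) = 0.
Proof.
move=> uA h1 h2 hf i j hi hj; apply: (comp_lin_inj uA).
have : ((f \mPo lin_change A)^`M(j))^`M(i) = 0.
  rewrite hf !mderivD (only_vars_deriv h1 hj) mderiv0 add0r mderiv_comm.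
  by rewrite (only_vars_deriv h2) ?mderiv0 // inE negbK.
move=> H; rewrite -[RHS]H chain_lin raddf_sum /= raddf_sum /=; apply eq_bigr => q _.
rewrite comp_mpolyZ mderivZ chain_lin; congr (_ *: _).
rewrite raddf_sum /=; apply eq_bigr => r _; by rewrite comp_mpolyZ.
Qed.


Definition Pmx (k : fieldType) m (A : 'M[k]_m) (I : {set 'I_m}) : 'M[k]_m :=
  A *m diag_mx (\row_i ((i \in I)%:R)) *m invmx A.

Lemma mx_part (k : fieldType) m (A C : 'M[k]_m) (I : {set 'I_m}) :
  A \in unitmx -> C^T = C ->
  (forall i j, i \in I -> j \notin I -> (A^T *m C *m A) i j = 0) ->
  C *m Pmx A I = (Pmx A I)^T *m C.
Proof.
move=> uA sC h.
set D := diag_mx (\row_i ((i \in I)%:R : k)).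
set E := diag_mx (\row_i ((i \notin I)%:R : k)).
set P := Pmx A I.
set Q := A *m E *m invmx A.
have DE : D + E = 1%:M.
  apply/matrixP => i j; rewrite !mxE.
  by case: (i == j); rewrite ?mulr0n ?mulr1n ?addr0 //; case: (i \in I); rewrite /= ?add0r ?addr0.
have PQ : P + Q = 1%:M by rewrite /P /Q /Pmx -mulmxDl -mulmxDr DE mulmx1 mulmxV.
have DME : D *m (A^T *m C *m A) *m E = 0.
  apply/matrixP => i j; rewrite mul_mx_diag mul_diag_mx !mxE.
  case hi: (i \in I); last by rewrite mul0r mul0r.
  case hj: (j \in I); first by rewrite /= mulr0.
  by have := h i j; rewrite hi hj mxE => ->; rewrite ?mulr0 ?mul0r.
have PCQ : P^T *m C *m Q = 0.
  rewrite /P /Q /Pmx !trmx_mul tr_diag_mx -/D.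
  have -> : (invmx A)^T *m (D *m A^T) *m C *m (A *m E *m invmx A)
    = (invmx A)^T *m (D *m (A^T *m C *m A) *m E) *m invmx A.
    by rewrite !mulmxA.
  by rewrite DME mulmx0 mul0mx.
clearbody P Q.
have QCP : Q^T *m C *m P = 0.
  by apply: trmx_inj; rewrite !trmx_mul !trmxK sC mulmxA PCQ trmx0.

transitivity (P^T *m C *m P).
  have -> : C *m P = (P + Q)^T *m (C *m P) by rewrite PQ trmx1 mul1mx.
  by rewrite linearD /= mulmxDl !mulmxA QCP addr0.
by rewrite -[RHS]mulmx1 -PQ mulmxDr PCQ addr0.
Qed.

Lemma Pmx_scalar_false (k : fieldType) m (A : 'M[k]_m) (I : {set 'I_m}) i j :
  A \in unitmx -> i \in I -> j \notin I ->
  (forall r s, r != s -> Pmx A I r s = 0) -> (forall r s, Pmx A I r r = Pmx A I s s) -> False.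
Proof.
move=> uA hi hj hoff hdiag.
set l := Pmx A I i i.
have hP : Pmx A I = l%:M.
  apply/matrixP => r s; rewrite [l%:M r s]mxE; case: (eqVneq r s) => [<-|ne].
    by rewrite mulr1n (hdiag r i).
  by rewrite mulr0n hoff.
have hD : diag_mx (\row_i ((i \in I)%:R : k)) = l%:M.
  have := congr1 (fun M => invmx A *m M *m A) hP; rewrite /Pmx /=.
  rewrite !mulmxA mulVmx // mul1mx -[_ *m invmx A *m A]mulmxA mulVmx // mulmx1 => ->.
  by rewrite mul_mx_scalar -scalemxAl mulVmx // scalemx1.
have h1 : diag_mx (\row_i ((i \in I)%:R : k)) i i = (l%:M : 'M[k]_m) i i by rewrite hD.
have h2 : diag_mx (\row_i ((i \in I)%:R : k)) j j = (l%:M : 'M[k]_m) j j by rewrite hD.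
move: h1 h2; rewrite !mxE !eqxx hi (negbTE hj) /= !mulr1n => <- /eqP; by rewrite eq_sym oner_eq0.
Qed.


Section Comb.
Local Close Scope ring_scope.
Variable N : nat.
Implicit Types (M : {set {set 'I_N}}) (S e : {set 'I_N}).

Definition pmS M S : Prop :=
  (forall e, e \in M -> #|e| = 2) /\ (forall v, #|[set e in M | v \in e]| = (v \in S)).

Lemma pmS_uniq M S e1 e2 v : pmS M S -> e1 \in M -> e2 \in M -> v \in e1 -> v \in e2 -> e1 = e2.
Proof.
move=> [_ h] h1 h2 v1 v2.
have : #|[set e in M | v \in e]| <= 1 by rewrite h; case: (v \in S).
move/card_le1_eqP => H; apply: H; by rewrite inE ?h1 ?h2 ?v1 ?v2.
Qed.

Lemma pmS_sub M S e v : pmS M S -> e \in M -> v \in e -> v \in S.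
Proof.
move=> [_ h] he hv; apply/negPn/negP => nS.
have : #|[set e in M | v \in e]| == 0 by rewrite h (negbTE nS).
rewrite cards_eq0 => /eqP E.
by have := in_set0 e; rewrite -E inE he hv.
Qed.

Lemma pmS_cover M S v : pmS M S -> v \in S -> exists2 e, e \in M & v \in e.
Proof.
move=> [_ h] hv.
have : #|[set e in M | v \in e]| == 1 by rewrite h hv.
move/cards1P => [e E]; have : e \in [set e in M | v \in e] by rewrite E set11.
by rewrite inE => /andP[eM ve]; exists e.
Qed.

Lemma pmS_add M S e : pmS M S -> #|e| = 2 -> [disjoint e & S] -> pmS (e |: M) (S :|: e).
Proof.
move=> hM he dis; have hM' := hM; case: hM => h1 h2; split.
  by move=> x; rewrite in_setU1 => /orP[/eqP ->|]; [exact he| exact: h1].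
move=> v.
case hv: (v \in e).
  have vS : v \notin S by rewrite (disjointFr dis hv).
  have -> : [set x in e |: M | v \in x] = [set e].
    apply/setP => x; rewrite !inE; apply/idP/idP.
      case/andP => /orP[//|xM] vx.
      by have := pmS_sub hM' xM vx; rewrite (negbTE vS).
    by move/eqP => ->; rewrite eqxx hv.
  by rewrite cards1 in_setU hv orbT.
have -> : [set x in e |: M | v \in x] = [set x in M | v \in x].
  apply/setP => x; rewrite !inE; case: (eqVneq x e) => [->|]; last by [].
  by rewrite hv andbF; apply/esym/negbTE; apply/negP => /andP[xM vx].
by rewrite h2 in_setU hv orbF.
Qed.

Lemma pmS_exists t : forall S, #|S| = t.*2 -> exists M, pmS M S.
Proof.
elim: t => [|t ih] S hS.
  exists set0; split; first by move=> e; rewrite inE.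
  move=> v; have -> : [set e in (set0 : {set {set 'I_N}}) | v \in e] = set0.
    by apply/setP => x; rewrite !inE.
  rewrite cards0; move/eqP: hS; rewrite cards_eq0 => /eqP ->; by rewrite inE.
have : 1 < #|S| by rewrite hS doubleS.
case/card_gt1P => a [b [aS bS ab]].
set e := [set a; b].
have heS : e \subset S by apply/subsetP => x; rewrite !inE => /orP[] /eqP ->.
have he : #|e| = 2 by rewrite cards2 ab.
have hS' : #|S :\: e| = t.*2.
  by rewrite cardsD (setIidPr heS) he hS doubleS subSS subSS subn0.
have [M hM] := ih _ hS'.
exists (e |: M).
have HS : (S :\: e) :|: e = S.
  apply/setP => x; rewrite in_setU in_setD; case xe: (x \in e); rewrite ?orbT ?orbF ?andbT //.
  by rewrite (subsetP heS _ xe).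
rewrite -HS; apply: pmS_add => //.
by rewrite disjoints_subset; apply/subsetP => x xe; rewrite in_setC in_setD xe.
Qed.
End Comb.


Section G.
Variable N : nat.
Implicit Types (M : {set {set 'I_N}}) (e : {set 'I_N}).

Definition ev (i : 'I_(nvars N)) : {set 'I_N} := val (enum_val i : edge N).
Definition mono (M : {set {set 'I_N}}) : 'X_{1..nvars N} :=
  [multinom ((ev i \in M) : nat) | i < nvars N].

Lemma ev_inj : injective ev.
Proof. by move=> i j /val_inj /enum_val_inj. Qed.

Lemma ev_size i : #|ev i| = 2%N.
Proof. by apply/eqP; exact: (valP (enum_val i : edge N)). Qed.

Lemma ev_surj e : #|e| = 2%N -> exists i, ev i = e.
Proof.
move=> he; have he' : #|e| == 2%N by rewrite he.
exists (enum_rank (Sub e he' : edge N)).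
by rewrite /ev enum_rankK.
Qed.

Lemma xe_ev (k : fieldType) i : xe k (ev i) = 'X_i.
Proof. by rewrite /xe /ev valK /= enum_valK. Qed.

Lemma monoE M i : mono M i = (ev i \in M).
Proof. by rewrite mnmE. Qed.

Lemma mono_add M p : ev p \notin M -> mono (ev p |: M) = (mono M + U_(p))%MM.
Proof.
move=> hp; apply/mnmP => i; rewrite mnmDE mnm1E !monoE in_setU1.
case: (eqVneq p i) => [<-|ne]; first by rewrite eqxx (negbTE hp).
have -> : (ev i == ev p) = false by apply/negbTE; apply: contra_neq ne => /ev_inj ->.
by rewrite addn0.
Qed.

Lemma prod_xe (k : fieldType) M : (forall e, e \in M -> #|e| = 2%N) ->
  \prod_(e in M) xe k e = 'X_[mono M].
Proof.
move=> hM; rewrite mpolyXE_id.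
have -> : \prod_(i < nvars N) ('X_i : {mpoly k[nvars N]}) ^+ mono M i
   = \prod_(i in [set i | ev i \in M]) xe k (ev i).
  rewrite [RHS]big_mkcond /=; apply eq_bigr => i _; rewrite monoE inE xe_ev.
  by case: (ev i \in M); rewrite ?expr1 ?expr0.
rewrite -(@big_imset _ _ _ _ _ ev) /=; last by move=> i j _ _; apply: ev_inj.
apply: eq_bigl => e; apply/idP/imsetP => [eM|[i]]; last by rewrite inE => ? ->.
have [i hi] := ev_surj (hM _ eM); exists i => //; by rewrite inE hi.
Qed.

Lemma mono_inj M1 M2 : (forall e, e \in M1 -> #|e| = 2%N) -> (forall e, e \in M2 -> #|e| = 2%N) ->
  mono M1 = mono M2 -> M1 = M2.
Proof.
move=> h1 h2 E; apply/setP => e; apply/idP/idP => he.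
  have [i hi] := ev_surj (h1 _ he); have := congr1 (fun m : 'X_{1..nvars N} => m i) E.
  by rewrite /= !monoE hi he; case: (e \in M2).
have [i hi] := ev_surj (h2 _ he); have := congr1 (fun m : 'X_{1..nvars N} => m i) E.
by rewrite /= !monoE hi he; case: (e \in M1).
Qed.

Lemma pm_pmS M : perfect_matching M <-> pmS M setT.
Proof.
rewrite /perfect_matching; split.
  case/andP => /forall_inP h1 /forallP h2; split; first by move=> e /h1 /eqP.
  by move=> v; rewrite inE; apply/eqP; exact: h2.
case=> h1 h2; apply/andP; split; first by apply/forall_inP => e /h1 ->.
by apply/forallP => v; rewrite h2 inE.
Qed.

Lemma pm_size M : perfect_matching M -> forall e, e \in M -> #|e| = 2%N.
Proof. by case/pm_pmS. Qed.

Lemma coef_f (k : fieldType) (a : {set {set 'I_N}} -> k) mu :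
  (matching_poly a)@_mu = \sum_(M | perfect_matching M) a M * (mono M == mu)%:R.
Proof.
rewrite /matching_poly raddf_sum /=; apply eq_bigr => M hM.
by rewrite mcoeffZ prod_xe ?mcoeffX //; exact: pm_size.
Qed.

Lemma coef_f_pm (k : fieldType) (a : {set {set 'I_N}} -> k) M0 :
  perfect_matching M0 -> (matching_poly a)@_(mono M0) = a M0.
Proof.
move=> h0; rewrite coef_f (bigD1 M0) //= eqxx mulr1 big1 ?addr0 // => M /andP[hM ne].
case: eqP => [E|]; last by rewrite mulr0.
by move: ne; rewrite (mono_inj (pm_size hM) (pm_size h0) E) eqxx.
Qed.

Lemma coef_f_nz (k : fieldType) (a : {set {set 'I_N}} -> k) mu :
  (matching_poly a)@_mu != 0 -> exists2 M, perfect_matching M & mono M = mu.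
Proof.
rewrite coef_f => h.
case: (boolP [exists M : {set {set 'I_N}}, perfect_matching M && (mono M == mu)]).
  by case/existsP => M /andP[hM /eqP E]; exists M.
move/existsPn => H; move: h; rewrite big1 ?eqxx // => M hM.
by have := H M; rewrite hM /= => /negbTE ->; rewrite mulr0.
Qed.
End G.


Section H.
Variable N : nat.
Variable k : fieldType.
Variable a : {set {set 'I_N}} -> k.
Variable W : {set 'I_N}.
Hypothesis hW : #|W| = 4%N.
Variable M' : {set {set 'I_N}}.
Hypothesis hM' : pmS M' (~: W).

Lemma nat3 (x y z w : bool) : (x : nat) = (y + z + w)%N -> z -> [/\ x, ~~ y & ~~ w].
Proof. by case: x; case: y; case: w; case: z. Qed.

Lemma ev_n0 (p : 'I_(nvars N)) : exists v, v \in ev p.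
Proof. by apply/card_gt0P; rewrite ev_size. Qed.

Lemma notin_M' p : ev p \subset W -> ev p \notin M'.
Proof.
move=> sub; apply/negP => hp; have [v hv] := ev_n0 p.
have := pmS_sub hM' hp hv; by rewrite inE (subsetP sub _ hv).
Qed.

Lemma supp_L p q : (matching_poly a)@_(mono M' + U_(p) + U_(q))%MM != 0 ->
  [/\ p != q, [disjoint ev p & ev q] & ev p :|: ev q = W].
Proof.
case/coef_f_nz => M hM E.
have hi : forall i, (ev i \in M : nat) = ((ev i \in M') + (p == i) + (q == i))%N.
  by move=> i; have := congr1 (fun m : 'X_{1..nvars N} => m i) E; rewrite /= !mnmDE !mnm1E !monoE.
have hp := hi p; rewrite eqxx in hp.
have hq := hi q; rewrite eqxx addnAC in hq.
have [hpM hpM' qp] := nat3 hp isT.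
have [hqM hqM' _] := nat3 hq isT.
have pq : p != q by rewrite eq_sym.
have subM : forall e, e \in M' -> e \in M.
  move=> e he; have [i hie] := ev_surj (proj1 hM' _ he).
  by have := hi i; rewrite hie he; case: (e \in M).
have hMS := (pm_pmS M).1 hM.
have subW : forall r, ev r \in M -> ev r \notin M' -> ev r \subset W.
  move=> r hr hr'; apply/subsetP => v hv; apply/negPn/negP => vW.
  have vW' : v \in ~: W by rewrite inE.
  have [e he ve] := pmS_cover hM' vW'.
  have E' := pmS_uniq hMS (subM _ he) hr ve hv.
  by move: hr'; rewrite -E' he.
have sp := subW p hpM hpM'; have sq := subW q hqM hqM'.
have dis : [disjoint ev p & ev q].
  apply/pred0P => v /=; apply/negP => /andP[vp vq].
  by move: pq; rewrite (ev_inj (pmS_uniq hMS hpM hqM vp vq)) eqxx.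
split => //; apply/eqP; rewrite eqEcard; apply/andP; split.
  by rewrite subUset sp sq.
by rewrite cardsU (disjoint_setI0 dis) cards0 !ev_size hW.
Qed.

Lemma pm_ext p q : [disjoint ev p & ev q] -> ev p :|: ev q = W ->
  perfect_matching (ev p |: (ev q |: M')).
Proof.
move=> dis U; apply/pm_pmS.
have sp : ev p \subset W by rewrite -U subsetUl.
have sq : ev q \subset W by rewrite -U subsetUr.
have h1 := pmS_add hM' (ev_size q) (_ : [disjoint ev q & ~: W]).
have h2 := pmS_add (h1 _) (ev_size p) (_ : [disjoint ev p & (~: W :|: ev q)]).
have -> : [set: 'I_N] = (~: W :|: ev q) :|: ev p.
  by rewrite -setUA [ev q :|: _]setUC U setUC setUCr.
apply: h2.
  by rewrite disjoints_subset setCK.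
rewrite disjoints_subset; apply/subsetP => v hv.
by rewrite in_setC in_setU in_setC negb_or negbK (subsetP sp _ hv) (disjointFr dis hv).
Qed.

Lemma val_V p q : [disjoint ev p & ev q] -> ev p :|: ev q = W ->
  ((matching_poly a)^`M(q)^`M(p))@_(mono M') = a (ev p |: (ev q |: M')).
Proof.
move=> dis U.
have sp : ev p \subset W by rewrite -U subsetUl.
have sq : ev q \subset W by rewrite -U subsetUr.
have np := notin_M' sp; have nq := notin_M' sq.
have pq : ev p != ev q.
  apply/negP => /eqP E; have [v hv] := ev_n0 p.
  by move: dis => /pred0P /(_ v) /=; rewrite hv -E hv.
rewrite !mcoeff_mderiv !mnmDE !monoE !mnm1E (negbTE np) (negbTE nq).
have -> : (p == q) = false by apply/negbTE; apply: contra_neq pq => ->.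
rewrite /= mulr1n mulr1n.
have -> : (mono M' + U_(p) + U_(q))%MM = mono (ev p |: (ev q |: M')).
  rewrite mono_add; last by rewrite in_setU1 negb_or pq np.
  by rewrite mono_add //; apply/mnmP => i; rewrite !mnmDE addnAC.
by rewrite coef_f_pm // pm_ext.
Qed.
End H.


Lemma meval0_coef (k : fieldType) m (p : {mpoly k[m]}) : p.@[fun _ => 0] = p@_0%MM.
Proof.
elim/mpolyind: p; first by rewrite meval0 mcoeff0.
move=> c mu p _ _ ih; rewrite mevalD mcoeffD mevalZ mcoeffZ mevalX mcoeffX ih; congr (_ * _ + _).
case: (eqVneq mu 0%MM) => [->|ne].
  by rewrite big1 // => i _; rewrite mnm0E expr0.
have [i hi] : exists i, mu i != 0%N.
  apply/existsP; apply: contraR ne => /existsPn H; apply/eqP/mnmP => i.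
  by rewrite mnm0E; apply/eqP; move/negbNE: (H i).
by rewrite (bigD1 i) //= expr0n (negbTE hi) mul0r.
Qed.

Lemma coef0_comp (k : fieldType) m (A : 'M[k]_m) (p : {mpoly k[m]}) :
  (p \mPo lin_change A)@_0%MM = p@_0%MM.
Proof.
rewrite -!meval0_coef comp_mpoly_meval; apply: meval_eq => i.
rewrite tnth_lin raddf_sum big1 // => j _; by rewrite /= mevalZ mevalXU mulr0.
Qed.

Lemma const_of_supp (k : fieldType) m (p : {mpoly k[m]}) :
  (forall mu, mu \in msupp p -> mu = 0%MM) -> p = (p@_0%MM)%:MP.
Proof.
move=> h; apply/mpolyP => mu; rewrite mcoeffC.
case: (eqVneq mu 0%MM) => [->|ne]; first by rewrite mulr1.
rewrite mulr0; apply/eqP; rewrite mcoeff_eq0; apply/negP => /h E.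
by move: ne; rewrite E eqxx.
Qed.

Lemma Zlemma (k : fieldType) m (g f1 f2 : {mpoly k[m]}) d2 :
  g = f1 + f2 -> g@_0%MM = 0 -> f1 != 0 -> (forall mu, mu \in msupp f1 -> mu = 0%MM) ->
  f2 \is d2.-homog -> g = 0.
Proof.
move=> hg g0 nf1 s1 h2.
have e1 := const_of_supp s1.
have c1 : f1@_0%MM != 0 by apply: contraNneq nf1 => E; rewrite e1 E.
have c2 : f2@_0%MM != 0.
  move: g0; rewrite hg mcoeffD => /eqP; rewrite addr_eq0 => /eqP E; by apply: contraNneq c1 => E2; rewrite E E2 oppr0.
have d0 : d2 = 0%N.
  move/dhomogP: h2 => /(_ 0%MM); rewrite mcoeff_msupp c2 => /(_ isT).
  by move=> <-; apply/eqP; rewrite /= mdeg_eq0.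
have s2 : forall mu, mu \in msupp f2 -> mu = 0%MM.
  move=> mu hmu; move/dhomogP: h2 => /(_ mu hmu); rewrite d0 => /eqP.
  by rewrite mdeg_eq0 => /eqP.
have e2 := const_of_supp s2.
by move: g0; rewrite hg e1 e2 -mpolyCD mcoeffC eqxx mulr1 => ->.
Qed.


Section K.
Variable n : nat.
Hypothesis hn : (3 <= n)%N.
Local Notation N := (2 * n)%N.
Variable k : fieldType.
Variable a : {set {set 'I_N}} -> k.
Hypothesis ha : forall M, perfect_matching M -> a M != 0.
Local Notation f := (matching_poly a).
Variable P : 'M[k]_(nvars N).
Definition cc mu (r q : 'I_(nvars N)) := ((f^`M(q))^`M(r))@_mu.
Hypothesis hCe : forall mu r s,
  \sum_q cc mu r q * P q s = \sum_p P p r * cc mu p s.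

Lemma two_out (e1 e2 : {set 'I_N}) : #|e1| = 2%N -> #|e2| = 2%N ->
  exists c d, [/\ c != d, c \notin e1 :|: e2 & d \notin e1 :|: e2].
Proof.
move=> h1 h2.
have hU : (#|e1 :|: e2| <= 4)%N.
  have := cardsUI e1 e2; rewrite h1 h2 => E; lia.
have := cardsC (e1 :|: e2); rewrite card_ord => E.
have : (1 < #|~: (e1 :|: e2)|)%N by lia.
case/card_gt1P => c [d [hc hd cd]]; exists c, d; split => //; by rewrite -in_setC.
Qed.

Lemma exists_disj (r t : 'I_(nvars N)) :
  exists s, [disjoint ev s & ev r] /\ [disjoint ev s & ev t].
Proof.
have [c [d [cd hc hd]]] := two_out (ev_size r) (ev_size t).
have h2 : #|[set c; d]| = 2%N by rewrite cards2 cd.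
have [s hs] := ev_surj h2.
exists s; rewrite hs; split; rewrite disjoints_subset; apply/subsetP => v;
  rewrite !inE => /orP[] /eqP ->; move: hc hd; rewrite !inE !negb_or;
  by move=> /andP[? ?] /andP[? ?].
Qed.

Lemma sub_eq2 (p q : 'I_(nvars N)) : ev p \subset ev q -> p = q.
Proof.
move=> h; apply: ev_inj; apply/eqP; rewrite eqEcard.
by rewrite h !ev_size leqnn.
Qed.

Lemma exists_M' (W : {set 'I_N}) : #|W| = 4%N -> exists M', pmS M' (~: W).
Proof.
move=> hW; apply: (@pmS_exists _ (n - 2)).
have := cardsC W; rewrite card_ord hW => E.
rewrite -mul2n; lia.
Qed.

Lemma cc_nz mu r q : cc mu r q != 0 -> f@_(mu + U_(r) + U_(q))%MM != 0.
Proof.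
rewrite /cc !mcoeff_mderiv; apply: contra_neq => ->; by rewrite !mul0rn.
Qed.

Lemma setup (r s : 'I_(nvars N)) : [disjoint ev r & ev s] ->
  exists M', [/\ pmS M' (~: (ev r :|: ev s)), #|ev r :|: ev s| = 4%N &
                 cc (mono M') r s != 0].
Proof.
move=> dis.
have hW : #|ev r :|: ev s| = 4%N by rewrite cardsU (disjoint_setI0 dis) cards0 !ev_size.
have [M' hM'] := exists_M' hW.
exists M'; split => //.
rewrite /cc (val_V a hM' dis) //; apply: ha.
exact: (pm_ext hM' dis).
Qed.

Lemma hoff (s' r : 'I_(nvars N)) : s' != r -> P s' r = 0.
Proof.
move=> ne.
have [s [d1 d2]] := exists_disj s' r.
have dis : [disjoint ev s' & ev s] by rewrite disjoint_sym.
have [M' [hM' hW nz]] := setup dis.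
have := hCe (mono M') r s.
rewrite big1; last first.
  move=> q _; case: (eqVneq (cc (mono M') r q) 0) => [->|/cc_nz H]; first by rewrite mul0r.
  have [_ _ U] := supp_L hW hM' H.
  have : ev r \subset ev s'.
    apply/subsetP => v hv; have : v \in ev s' :|: ev s by rewrite -U inE hv.
    by rewrite inE (disjointFl d2 hv) orbF.
  by move/sub_eq2 => E; move: ne; rewrite E eqxx.
rewrite (bigD1 s') //= big1 ?addr0; last first.
  move=> p hp; case: (eqVneq (cc (mono M') p s) 0) => [->|/cc_nz H]; first by rewrite mulr0.
  have [_ dps U] := supp_L hW hM' H.
  have : ev p \subset ev s'.
    apply/subsetP => v hv; have : v \in ev s' :|: ev s by rewrite -U inE hv.
    by rewrite inE (disjointFr dps hv) orbF.
  by move/sub_eq2 => E; move: hp; rewrite E eqxx.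
move/esym/eqP; rewrite mulf_eq0 (negbTE nz) orbF => /eqP //.
Qed.

Lemma hdiag_disj (r s : 'I_(nvars N)) : [disjoint ev r & ev s] -> P r r = P s s.
Proof.
move=> dis.
have [M' [hM' hW nz]] := setup dis.
have := hCe (mono M') r s.
rewrite (bigD1 s) //= big1 ?addr0; last first.
  by move=> q hq; rewrite hoff ?mulr0.
rewrite (bigD1 r) //= big1 ?addr0; last first.
  by move=> p hp; rewrite hoff ?mul0r.
by rewrite mulrC => /mulIf => /(_ nz).
Qed.

Lemma hdiag (r t : 'I_(nvars N)) : P r r = P t t.
Proof.
have [s [d1 d2]] := exists_disj r t.
rewrite -(hdiag_disj d1) (hdiag_disj d2) //.
Qed.
End K.


Lemma main_mx (k : fieldType) m (A : 'M[k]_m) (I : {set 'I_m}) (f1 f2 f : {mpoly k[m]}) :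
  A \in unitmx -> only_vars I f1 -> only_vars (~: I) f2 ->
  f \mPo lin_change A = f1 + f2 ->
  forall mu r s, \sum_q ((f^`M(q))^`M(r))@_mu * Pmx A I q s
             = \sum_p Pmx A I p r * ((f^`M(s))^`M(p))@_mu.
Proof.
move=> uA h1 h2 hf mu.
set Cm := \matrix_(r, q) ((f^`M(q))^`M(r))@_mu : 'M[k]_m.
have hC : Cm *m Pmx A I = (Pmx A I)^T *m Cm.
  apply: mx_part => //.
    by apply/matrixP => r q; rewrite !mxE mderiv_comm.
  move=> i j hi hj; have := congr1 (mcoeff mu) (second_deriv_zero uA h1 h2 hf hi hj).
  rewrite mcoeff0 raddf_sum /= => <-; rewrite !mxE; apply eq_bigr => q _.
  rewrite mcoeffZ raddf_sum /= mulrC !mxE; congr (_ * _); apply eq_bigr => r _.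
  by rewrite !mxE mcoeffZ.
have hCm : forall x y, Cm x y = ((f^`M(y))^`M(x))@_mu by move=> x y; rewrite /Cm mxE.
have hT : forall x y, (Pmx A I)^T x y = Pmx A I y x by move=> x y; rewrite [LHS]mxE.
move=> r s; move/matrixP: hC => /(_ r s).
rewrite [LHS]mxE [RHS]mxE.
under eq_bigr do rewrite hCm.
under [in RHS]eq_bigr do rewrite hCm hT.
by [].
Qed.


End Helpers.
Import Helpers.
Import Order.TTheory GRing.Theory.

Theorem corollary5p8 (k : fieldType) (n : nat) (hn : (3 <= n)%N)
  (hk : exists x : k, x != 0 /\ x != 1)
  (a : {set {set 'I_(2 * n)}} -> k)
  (ha : forall M, perfect_matching M -> a M != 0) :
  ~ direct_sum (matching_poly a).
Proof.
move=> [A [I [f1 [f2 [d1 [d2 [uA [nf1 [nf2 [hd1 [hd2 [ov1 [ov2 hf]]]]]]]]]]]]].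
have [M0 hM0] : exists M0 : {set {set 'I_(2 * n)}}, perfect_matching M0.
  have hS : #|[set: 'I_(2 * n)]| = n.*2 by rewrite cardsT card_ord -mul2n.
  have [M hM] := pmS_exists hS.
  by exists M; apply/pm_pmS.
have hv0 : (0 < 2 * n)%N by lia.
set v0 : 'I_(2 * n) := Ordinal hv0.
have f0 : (matching_poly a)@_0%MM = 0.
  rewrite coef_f big1 // => M hM.
  have [e he ve] := pmS_cover ((pm_pmS M).1 hM) (v := v0) (in_setT _).
  have [i hi] := ev_surj (pm_size hM he).
  case: eqP => [E|]; last by rewrite mulr0.
  have := congr1 (fun m : 'X_{1..nvars (2 * n)} => m i) E.
  by rewrite /= monoE mnm0E hi he.
have g0 : (matching_poly a \mPo lin_change A)@_0%MM = 0 by rewrite coef0_comp.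
have gnz : matching_poly a \mPo lin_change A != 0.
  apply/negP => /eqP /(comp_lin_inj uA) E.
  by have := coef_f_pm a hM0; rewrite E mcoeff0 => /esym/eqP; rewrite (negbTE (ha _ hM0)).
case: (set_0Vmem I) => [I0|[i0 hi0]].
  apply/(negP gnz)/eqP; apply: (Zlemma hf g0 nf1 _ hd2) => mu /ov1 H.
  by apply/mnmP => i; rewrite mnm0E; apply: H; rewrite I0 inE.
case: (set_0Vmem (~: I)) => [I1|[j0 hj0]].
  apply/(negP gnz)/eqP; rewrite addrC in hf.
  apply: (Zlemma hf g0 nf2 _ hd1) => mu /ov2 H.
  by apply/mnmP => i; rewrite mnm0E; apply: H; rewrite I1 inE.
have hj0' : j0 \notin I by rewrite inE in hj0.
have hCe := main_mx uA ov1 ov2 hf.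
apply: (Pmx_scalar_false uA hi0 hj0').
  by move=> r s; apply: (hoff hn ha hCe).
by move=> r s; apply: (hdiag hn ha hCe).
Qed.
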